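(* Let $G$ be a connected graph with $\gamma(G)\ge 2$. For any graph $H$, $$\mu_t(G\circ H)=n(G)\,(n(H)-1)+\mu_t(G).$$
   Context: All graphs are finite, simple and undirected; $n(G)$ denotes the order of $G$ and $\gamma(G)$ its domination number. The lexicographic product $G\circ H$ has vertex set $V(G)\times V(H)$, with $(x,y)$ adjacent to $(x',y')$ iff $xx'\in E(G)$, or $x=x'$ and $yy'\in E(H)$. Let $F$ be a connected graph and $X\subseteq V(F)$. Two vertices $x,y\in V(F)$ are $X$-visible if there exists a shortest $x,y$-path in $F$ none of whose internal vertices belongs to $X$. $X$ is a total mutual-visibility set of $F$ if every two vertices of $F$ are $X$-visible (the empty set is allowed). $\mu_t(F)$ is the maximum cardinality of a total mutual-visibility set of $F$. *)

(* Defs.v *)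
From mathcomp Require Import all_boot.
From mathcomp Require Import boolp.
Set Implicit Arguments. Unset Strict Implicit. Unset Printing Implicit Defensive.

Section Graphs.
Variable T : finType.
Variable g : rel T.

Definition simple_graph := symmetric g /\ irreflexive g.

Definition connected_graph := forall x y : T, connect g x y.

Definition dominating (D : {set T}) : bool :=
  [forall v, (v \in D) || [exists u in D, g u v]].

Definition domination_number : nat :=
  \big[minn/#|T|]_(D : {set T} | dominating D) #|D|.

(* A walk from x is x :: p with path g x p; it ends at last x p;
   its length is size p. *)
Definition xy_walk (x y : T) (p : seq T) : bool :=
  path g x p && (last x p == y).

Definition shortest_xy_path (x y : T) (p : seq T) : Prop :=
  xy_walk x y p /\ forall q, xy_walk x y q -> size p <= size q.

(* internal vertices of the path x :: p (all but the two endpoints) *)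
Definition internal_vertices (x : T) (p : seq T) : seq T := behead (belast x p).

Definition X_visible (X : {set T}) (x y : T) : Prop :=
  exists p, shortest_xy_path x y p /\ forall z, z \in internal_vertices x p -> z \notin X.

Definition total_mutual_visibility_set (X : {set T}) : Prop :=
  forall x y : T, X_visible X x y.

Definition mu_t : nat :=
  \max_(X : {set T} | `[< total_mutual_visibility_set X >]) #|X|.

End Graphs.

Definition lexprod (T U : finType) (gG : rel T) (gH : rel U) : rel (T * U) :=
  fun a b => gG a.1 b.1 || ((a.1 == b.1) && gH a.2 b.2).

(* Main.v *)
From HB Require Import structures.
Require Import Defs.
From mathcomp Require Import all_boot.
From mathcomp Require Import boolp.
From mathcomp Require Import zify.

Module Aux.
Set Implicit Arguments. Unset Strict Implicit. Unset Printing Implicit Defensive.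

Section Gen.
Variable T : finType.
Variable g : rel T.

Lemma shortest_exists (x y : T) : connect g x y -> exists p, shortest_xy_path g x y p.
Proof.
move=> /connectP [p pp ey].
have exP : exists n, `[< exists q, xy_walk g x y q /\ size q = n >].
  exists (size p); apply/asboolP; exists p; split => //.
  by rewrite /xy_walk pp -ey eqxx.
case: (ex_minnP exP) => n /asboolP [q [wq sq]] Hmin.
exists q; split => // q' wq'; rewrite sq; apply: Hmin; apply/asboolP; by exists q'.
Qed.

End Gen.

Section Prod.
Variables (T U : finType) (gG : rel T) (gH : rel U).
Notation gP := (lexprod gG gH).

Lemma path_fst (a : T * U) s : path gG a.1 (map fst s) -> path gP a s.
Proof.
elim: s a => [|b s IH] a //=; case/andP=> ab ps.
by rewrite /lexprod ab /= IH.
Qed.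

Lemma proj_walk a q : path gP a q ->
  exists r, [/\ path gG a.1 r, last a.1 r = (last a q).1, size r <= size q
     & (size r = size q -> r = map fst q)].
Proof.
elim: q a => [|b q IH] a /=.
  by move=> _; exists [::].
case/andP=> ab pq; case: (IH b pq) => r [pr lr sr er].
move: ab; rewrite /lexprod; case/orP => [ab | /andP [/eqP e _]].
  exists (b.1 :: r); split => //=; first by rewrite ab.
  by move=> [] /er ->.
exists r; split => //; first by rewrite e.
  by rewrite e.
  by apply: leqW.
by move=> E; move: sr; rewrite E ltnn.
Qed.

Fixpoint liftw (h0 he : U) (q : seq T) : seq (T * U) :=
  match q with
  | [::] => [::]
  | [:: t] => [:: (t, he)]
  | t :: q' => (t, h0) :: liftw h0 he q'
  end.

Lemma lift_fst h0 he q : map fst (liftw h0 he q) = q.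
Proof. elim: q => [|t q IH] //=; case: q IH => [|t' q] IH //=; by rewrite IH. Qed.

Lemma size_lift h0 he q : size (liftw h0 he q) = size q.
Proof. by rewrite -(size_map fst) lift_fst. Qed.

Lemma path_lift h0 he x h q : path gG x q -> path gP (x, h) (liftw h0 he q).
Proof. by move=> pq; apply: path_fst; rewrite lift_fst. Qed.

Lemma last_lift h0 he a t q : last a (liftw h0 he (t :: q)) = (last t q, he).
Proof. by elim: q a t => [|t' q IH] a t //=; rewrite IH. Qed.

Lemma belast_lift h0 he a t q :
  belast a (liftw h0 he (t :: q)) = a :: map (fun t => (t, h0)) (belast t q).
Proof.
elim: q a t => [|t' q IH] a t //=.
by rewrite IH.
Qed.

Lemma internal_lift h0 he a x q :
  internal_vertices a (liftw h0 he q) = map (fun t => (t, h0)) (internal_vertices x q).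
Proof. case: q => [|t q] //; by rewrite /internal_vertices belast_lift. Qed.

Lemma internal_fst (a : T * U) (q : seq (T * U)) :
  internal_vertices a.1 (map fst q) = map fst (internal_vertices a q).
Proof. by rewrite /internal_vertices belast_map behead_map. Qed.

End Prod.

HB.instance Definition _ := SemiGroup.isComLaw.Build nat minn minnA minnC.

Section Main.
Variables (T U : finType) (gG : rel T) (gH : rel U).
Notation gP := (lexprod gG gH).
Hypothesis symG : symmetric gG.
Hypothesis domG : 2 <= domination_number gG.

Lemma neighbor_out (X : {set T}) : total_mutual_visibility_set gG X ->
  forall x, exists u, gG x u && (u \notin X).
Proof.
move=> HX x.
have nd : ~~ dominating gG [set x].
  apply/negP => D; move: domG; rewrite /domination_number (bigD1 [set x]) //=.
  move=> H; have := leq_trans H (geq_minl _ _); by rewrite cards1.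
case/forallPn: nd => v /norP [nv ne]; rewrite in_set1 in nv.
have ngv : ~~ gG x v.
  apply/negP => xv; case/negP: ne; apply/existsP; exists x; by rewrite in_set1 eqxx xv.
case: (HX x v) => p [[/andP [pp /eqP lp] _] ip].
case: p pp lp ip => [|u [|w p]] /=.
- by move=> _ E; move: nv; rewrite E eqxx.
- by move=> /andP [xu _] E; move: ngv; rewrite -E xu.
move=> /andP [xu _] _ ip; exists u; rewrite xu /=; apply: ip.
by rewrite /internal_vertices /= mem_head.
Qed.

Lemma lower (X : {set T}) (h0 : U) : total_mutual_visibility_set gG X ->
  total_mutual_visibility_set gP (~: [set (t, h0) | t in ~: X]).
Proof.
move=> HX [a1 a2] [b1 b2].
case: (eqVneq a1 b1) => e.
- case: (eqVneq (a1, a2) (b1, b2)) => [<-|nab].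
    exists [::]; split; last by [].
    by split; [rewrite /xy_walk /= eqxx | by []].
  case ab: (gP (a1, a2) (b1, b2)).
    exists [:: (b1, b2)]; split; last by [].
    split; first by rewrite /xy_walk /= ab eqxx.
    case => [|c q] //= /andP [_ /eqP /= E]; by move: nab; rewrite E eqxx.
  case: (neighbor_out HX a1) => u /andP [au uX].
  exists [:: (u, h0); (b1, b2)]; split.
    split.
      rewrite /xy_walk /= /lexprod /= au /=.
      by rewrite symG -e au eqxx.
    case => [|c [|d q]] //=.
      by move=> /andP [_ /eqP /= E]; move: nab; rewrite E eqxx.
    by move=> /andP [/andP [ac _] /eqP /= E]; move: ab; rewrite -E ac.
  move=> z; rewrite /internal_vertices /= inE => /eqP ->.
  rewrite in_setC negbK; apply/imsetP; exists u => //; by rewrite in_setC.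
case: (HX a1 b1) => p [[wp minp] ip].
case: p wp minp ip => [|t p] wp minp ip.
  by move: wp e => /andP [_ /eqP /= ->]; rewrite eqxx.
exists (liftw h0 b2 (t :: p)); split.
  split.
    move: wp => /andP [pp /eqP lp].
    rewrite /xy_walk (path_lift gH) //= last_lift.
    by move: lp => /= ->.
  move=> q /andP [pq /eqP lq].
  case: (proj_walk pq) => r [pr lr sr _].
  rewrite size_lift; apply: leq_trans sr; apply: minp.
  by rewrite /xy_walk pr lr lq eqxx.
move=> z; rewrite (internal_lift _ _ _ a1) => /mapP [t0 it0 ->].
rewrite in_setC negbK; apply/imsetP; exists t0 => //; rewrite in_setC; exact: ip.
Qed.

End Main.

Section Up.
Variables (T U : finType) (gG : rel T) (gH : rel U).
Notation gP := (lexprod gG gH).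

Lemma upper (S : {set T * U}) (h : U) : total_mutual_visibility_set gP S ->
  total_mutual_visibility_set gG [set t | [forall k, (t, k) \in S]].
Proof.
move=> HS x y.
case: (eqVneq x y) => [<-|nxy].
  exists [::]; split; last by [].
  by split; [rewrite /xy_walk /= eqxx | by []].
case: (HS (x, h) (y, h)) => P [[/andP [pP /eqP lP] minP] iP].
case: (proj_walk pP) => r [pr lr sr er].
rewrite lP /= in lr.
have walk_lift : forall q, path gG x q -> last x q = y ->
    xy_walk gP (x, h) (y, h) (liftw h h q).
  case => [|t q] pq lq; first by move: nxy; rewrite -lq /= eqxx.
  rewrite /xy_walk (path_lift gH) // last_lift; by move: lq => /= ->; rewrite eqxx.
have sPr : size P <= size r.
  by rewrite -(size_lift h h r); apply: minP; apply: walk_lift.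
have rP : r = map fst P by apply: er; apply/eqP; rewrite eqn_leq sr sPr.
exists r; split.
  split; first by rewrite /xy_walk pr lr eqxx.
  move=> q /andP [pq /eqP lq].
  apply: (leq_trans sr); rewrite -(size_lift h h q); apply: minP.
  exact: walk_lift.
move=> z; rewrite rP -[x]/((x, h).1) internal_fst => /mapP [w iw ->].
apply/negP; rewrite inE => /forallP /(_ w.2); rewrite -surjective_pairing.
by apply/negP; apply: iP.
Qed.

Lemma count_upper (S : {set T * U}) :
  0 < #|U| ->
  #|S| <= #|T| * (#|U| - 1) + #|[set t | [forall k, (t, k) \in S]]|.
Proof.
move=> U0.
set X := [set t | _].
have E : #|S| = \sum_(t : T) \sum_(k : U) ((t, k) \in S : nat).
  rewrite pair_big -sum1_card big_mkcond /=; apply: eq_bigr => [[t k]] _ /=.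
  by case: ((t, k) \in S).
have EX : #|X| = \sum_(t : T) (t \in X : nat).
  rewrite -sum1_card big_mkcond /=; apply: eq_bigr => t _; by case: (t \in X).
rewrite E EX -sum_nat_const -big_split /=; apply: leq_sum => t _.
have tot : \sum_(k : U) ((t, k) \in S : nat) + \sum_(k : U) ((t, k) \notin S : nat) = #|U|.
  rewrite -big_split /=.
  under eq_bigr do rewrite addnC addn_negb.
  by rewrite sum1_card.
case tX : (t \in X) => /=.
  move: tot U0; set a := \sum_(k : U) _; set b := \sum_(k : U) _; set u := #|U|; rewrite /nat_of_bool; lia.
have [k nk] : exists k, (t, k) \notin S.
  move: tX; rewrite inE => /negbT /forallPn [k nk]; by exists k.
move: tot; rewrite [X in _ + X](bigD1 k) //= nk; lia.
Qed.

End Up.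

End Aux.
Import Aux.

Theorem theorem4p3 (T U : finType) (gG : rel T) (gH : rel U) :
  simple_graph gG -> simple_graph gH ->
  connected_graph gG -> 2 <= domination_number gG ->
  0 < #|U| ->
  mu_t (lexprod gG gH) = #|T| * (#|U| - 1) + mu_t gG.
Proof.
move=> [symG _] _ conG domG U0.
have U0' := U0; case/card_gt0P: U0' => h0 _.
have TMV0 : total_mutual_visibility_set gG set0.
  move=> x y; case: (shortest_exists (conG x y)) => p sp; exists p; split => //.
  by move=> z _; rewrite in_set0.
have ne : 0 < #|(fun X : {set T} => `[< total_mutual_visibility_set gG X >])|.
  apply/card_gt0P; exists set0; rewrite unfold_in; exact: asboolT.
have [X HX eX] := eq_bigmax_cond (fun X : {set T} => #|X|) ne.
have eM : mu_t gG = #|X| by exact: eX.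
have {HX} HX : total_mutual_visibility_set gG X.
  by move: HX; rewrite unfold_in => /asboolP.
apply/eqP; rewrite eqn_leq; apply/andP; split.
  apply/bigmax_leqP => S /asboolP HS.
  have HX' := upper h0 HS.
  have le1 : #|[set t | [forall k, (t, k) \in S]]| <= mu_t gG :=
    leq_bigmax_cond _ (asboolT HX').
  apply: leq_trans (count_upper S U0) _; by rewrite leq_add2l.
set C := [set (t, h0) | t in ~: X].
have HS := lower gH symG domG h0 HX.
have le3 : #|~: C| <= mu_t (lexprod gG gH) := leq_bigmax_cond _ (asboolT HS).
apply: leq_trans le3.
have c1 := cardsC C.
have c2 : #|C| = #|~: X|.
  by rewrite card_imset // => a b [].
have c3 := cardsC X.
rewrite card_prod in c1.
rewrite eM mulnBr muln1.
have tle : #|T| <= #|T| * #|U| by rewrite leq_pmulr.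
move: c1 c2 c3 tle; set tu := #|T| * #|U|; set a := #|~: C|; set b := #|C|; set c := #|~: X|; set d := #|X|; set t := #|T|; lia.
Qed.
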